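(* Let $d\ge 2$ and let $W_1,\dots,W_n$ be hyperplanes in $\mathbb R^d$ which do phase retrieval. Then $n\ge 2d-2$. Moreover, if $n=2d-2$ and $W_i^\perp=\operatorname{span}\{\phi_i\}$ for $i=1,\dots,2d-2$, then $\{\phi_i\}_{i=1}^{2d-2}$ is full spark.
   Context: A hyperplane is a subspace of dimension $d-1$. A family of subspaces $\{W_i\}$ with orthogonal projections $P_i$ does phase retrieval if whenever $x,y\in\mathbb R^d$ satisfy $\|P_ix\|=\|P_iy\|$ for all $i$, then $x=\pm y$. A family of vectors in $\mathbb R^d$ is full spark if every subset of $d$ of its vectors is linearly independent. *)

(* Defs.v *)
From Stdlib Require Import ClassicalEpsilon.
From mathcomp Require Import all_boot all_order all_algebra.
From mathcomp Require Import reals.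
Set Implicit Arguments. Unset Strict Implicit. Unset Printing Implicit Defensive.
Import Order.TTheory GRing.Theory Num.Theory.
Local Open Scope ring_scope.

Section Defs.
Variables (R : realType) (d : nat).

(* Vectors of R^d are row vectors 'rV[R]_d; a subspace is the row space of a
   square matrix W : 'M[R]_d; inner product <u,v> = (u *m v^T) 0 0. *)
Definition dotv (u v : 'rV[R]_d) : R := (u *m v^T) 0 0.
Definition vnorm (u : 'rV[R]_d) : R := Num.sqrt (dotv u u).

Definition hyperplane (W : 'M[R]_d) : Prop := \rank W = d.-1.

Definition orthocompl (W : 'M[R]_d) : 'M[R]_d := kermx W^T.

Definition is_orth_proj (W : 'M[R]_d) (x p : 'rV[R]_d) : Prop :=
  (p <= W)%MS /\ forall w : 'rV[R]_d, (w <= W)%MS -> dotv (x - p) w = 0.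

(* The orthogonal projection P_W x (it exists and is unique). *)
Definition orth_proj (W : 'M[R]_d) (x : 'rV[R]_d) : 'rV[R]_d :=
  epsilon (inhabits (0 : 'rV[R]_d)) (is_orth_proj W x).

Definition phase_retrieval (n : nat) (W : 'I_n -> 'M[R]_d) : Prop :=
  forall x y : 'rV[R]_d,
    (forall i, vnorm (orth_proj (W i) x) = vnorm (orth_proj (W i) y)) ->
    x = y \/ x = - y.

Definition full_spark (n : nat) (phi : 'I_n -> 'rV[R]_d) : Prop :=
  forall f : 'I_d -> 'I_n, injective f ->
    row_free (\matrix_(k < d) phi (f k)).

End Defs.

(* Main.v *)
Require Import Defs.
From Stdlib Require Import ClassicalEpsilon.
From mathcomp Require Import all_boot all_order all_algebra.
From mathcomp Require Import reals.
From mathcomp Require Import zify ring lra.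
Import Order.TTheory GRing.Theory Num.Theory.
Local Open Scope ring_scope.
Set Implicit Arguments. Unset Strict Implicit.

Section Work.
Variables (R : realType) (d : nat).
Local Notation V := 'rV[R]_d.

Lemma dotvE (u v : V) : dotv u v = \sum_j u 0 j * v 0 j.
Proof. by rewrite /dotv !mxE; apply: eq_bigr => j _; rewrite mxE. Qed.

Lemma dotvC (u v : V) : dotv u v = dotv v u.
Proof. by rewrite !dotvE; apply: eq_bigr => j _; rewrite mulrC. Qed.

Lemma dotvDl (u v w : V) : dotv (u + v) w = dotv u w + dotv v w.
Proof. by rewrite !dotvE -big_split; apply: eq_bigr => j _; rewrite mxE mulrDl. Qed.

Lemma dotvNl (u w : V) : dotv (- u) w = - dotv u w.
Proof. by rewrite !dotvE -sumrN; apply: eq_bigr => j _; rewrite mxE mulNr. Qed.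

Lemma dotvZl a (u w : V) : dotv (a *: u) w = a * dotv u w.
Proof. by rewrite !dotvE mulr_sumr; apply: eq_bigr => j _; rewrite mxE mulrA. Qed.

Lemma dotvDr (u v w : V) : dotv w (u + v) = dotv w u + dotv w v.
Proof. by rewrite dotvC dotvDl !(dotvC w). Qed.

Lemma dotvNr (u w : V) : dotv w (- u) = - dotv w u.
Proof. by rewrite dotvC dotvNl dotvC. Qed.

Lemma dotvZr a (u w : V) : dotv w (a *: u) = a * dotv w u.
Proof. by rewrite dotvC dotvZl dotvC. Qed.

Lemma dotv_ge0 (u : V) : 0 <= dotv u u.
Proof. by rewrite dotvE; apply: sumr_ge0 => j _; rewrite -expr2 sqr_ge0. Qed.

Lemma dotv_eq0 (u : V) : dotv u u = 0 -> u = 0.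
Proof.
rewrite dotvE => H; apply/rowP => j; rewrite mxE.
have := psumr_eq0P (fun i _ => (eq_ind _ (fun z => 0 <= z) (sqr_ge0 (u 0 i)) _ (expr2 _))) H (erefl true : true).
by move=> /(_ j) /eqP; rewrite -expr2 sqrf_eq0 => /eqP.
Qed.

Lemma orthoW (W : 'M[R]_d) (phi w : V) :
  (phi <= orthocompl W)%MS -> (w <= W)%MS -> dotv phi w = 0.
Proof.
rewrite /orthocompl sub_kermx => /eqP H /submxP [a ->].
by rewrite /dotv trmx_mul mulmxA H mul0mx mxE.
Qed.

Lemma phi_rank (W : 'M[R]_d) (phi : V) : (0 < d)%N -> hyperplane W ->
  (phi == orthocompl W)%MS -> \rank phi = 1%N.
Proof.
move=> d0 hW /eqmx_rank ->; rewrite /orthocompl mxrank_ker mxrank_tr hW; lia.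
Qed.

Lemma W_eq (W : 'M[R]_d) (phi : V) : (0 < d)%N -> hyperplane W ->
  (phi == orthocompl W)%MS -> (kermx phi^T <= W)%MS.
Proof.
move=> d0 hW hphi.
have sub : (W <= kermx phi^T)%MS.
  rewrite sub_kermx; move: (hphi) => /andP [h _].
  move: h; rewrite /orthocompl sub_kermx => /eqP H.
  by rewrite -(trmxK W) -trmx_mul H linear0.
have : (W == kermx phi^T)%MS.
  case: (mxrank_leqif_eq sub) => _ <-.
  by rewrite mxrank_ker mxrank_tr (phi_rank d0 hW hphi) hW subn1.
by case/andP.
Qed.

Lemma phi_ne0 (W : 'M[R]_d) (phi : V) : (0 < d)%N -> hyperplane W ->
  (phi == orthocompl W)%MS -> phi != 0.
Proof. by move=> d0 hW hphi; rewrite -mxrank_eq0 (phi_rank d0 hW hphi). Qed.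

Lemma proj_norm (W : 'M[R]_d) (phi x : V) : (0 < d)%N -> hyperplane W ->
  (phi == orthocompl W)%MS ->
  dotv (orth_proj W x) (orth_proj W x) =
  dotv x x - dotv x phi ^+ 2 / dotv phi phi.
Proof.
move=> d0 hW hphi.
have pp : dotv phi phi != 0.
  by apply/eqP => /dotv_eq0 /eqP; apply/negP; apply: phi_ne0 hphi.
set c := dotv x phi / dotv phi phi.
set p0 := x - c *: phi.
have phiW : (phi <= orthocompl W)%MS by case/andP: hphi.
have xp0 : x - p0 = c *: phi by rewrite /p0 opprB addrC subrK.
have Hp0 : is_orth_proj W x p0.
  split.
    apply: submx_trans (W_eq d0 hW hphi).
    rewrite sub_kermx; apply/eqP/matrixP => i j; rewrite !ord1 [RHS]mxE.
    have -> : (p0 *m phi^T) 0 0 = dotv p0 phi by [].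
    rewrite /p0 dotvDl dotvNl dotvZl /c; field; exact: pp.
  by move=> w Hw; rewrite xp0 dotvZl (orthoW phiW Hw) mulr0.
have Hp : is_orth_proj W x (orth_proj W x).
  by rewrite /orth_proj; apply: epsilon_spec; exists p0.
have -> : orth_proj W x = p0.
  case: Hp => pW pO; case: Hp0 => p0W p0O.
  have zW : (p0 - orth_proj W x <= W)%MS.
    by rewrite addmx_sub // -scaleN1r scalemx_sub.
  have : dotv (p0 - orth_proj W x) (p0 - orth_proj W x) = 0.
    have E : p0 - orth_proj W x = (x - orth_proj W x) - (x - p0).
      by symmetry; rewrite opprB addrC addrA subrK.
    by rewrite {1}E dotvDl dotvNl (pO _ zW) (p0O _ zW) subrr.
  by move/dotv_eq0/eqP; rewrite subr_eq0 => /eqP.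
rewrite /p0 !dotvDl !dotvNl !dotvDr !dotvNr !dotvZl !dotvZr (dotvC phi x) /c.
field; exact: pp.
Qed.

Lemma PR_key n (W : 'I_n -> 'M[R]_d) (phi : 'I_n -> V) : (0 < d)%N ->
  (forall i, hyperplane (W i)) -> (forall i, (phi i == orthocompl (W i))%MS) ->
  phase_retrieval W -> forall u v : V, dotv u v = 0 ->
  (forall i, dotv u (phi i) = 0 \/ dotv v (phi i) = 0) -> u = 0 \/ v = 0.
Proof.
move=> d0 hW hphi PR u v uv Hi.
have vu : dotv v u = 0 by rewrite dotvC.
case: (PR (u + v) (u - v)).
- move=> i; rewrite /vnorm !(proj_norm _ d0 (hW i) (hphi i)); congr Num.sqrt.
  rewrite !dotvDl !dotvNl !dotvDr !dotvNr uv vu.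
  by case: (Hi i) => ->; ring.
- move=> E; right; apply/rowP => j; have := congr1 (fun M : V => M 0 j) E.
  rewrite !mxE; lra.
- move=> E; left; apply/rowP => j; have := congr1 (fun M : V => M 0 j) E.
  rewrite !mxE; lra.
Qed.

Lemma exists_orth k (A : 'M[R]_(k, d)) : (\rank A < d)%N ->
  exists2 u : V, u != 0 & forall j, dotv u (row j A) = 0.
Proof.
move=> rA.
set K := kermx A^T.
have rK : \rank K = (d - \rank A)%N by rewrite mxrank_ker mxrank_tr.
have K0 : K != 0 by rewrite -mxrank_eq0 rK; lia.
have [i Hi] : exists i, row i K != 0.
  case: (pickP (fun i => row i K != 0)) => [i Hi | H]; first by exists i.
  have K00 : K = 0.
    apply/row_matrixP => l; rewrite row0; move: (H l) => /= /negbFE/eqP //.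
  by rewrite K00 eqxx in K0.
exists (row i K) => // j.
have : (row i K <= kermx A^T)%MS by exact: row_sub.
rewrite sub_kermx => /eqP /(congr1 (fun M : 'M_(1, k) => M 0 j)).
rewrite !mxE => <-; rewrite dotvE; apply: eq_bigr => l _; rewrite !mxE.
done.
Qed.

Lemma exists_orth_seq (s : seq V) : (size s < d)%N ->
  exists2 u : V, u != 0 & forall w, w \in s -> dotv u w = 0.
Proof.
move=> hs.
have [u u0 Hu] := @exists_orth _ (\matrix_(j < size s) s`_j)
  (leq_ltn_trans (rank_leq_row _) hs).
exists u => // w ws.
have := Hu (Ordinal (eq_ind_r is_true ws (index_mem w s))).
rewrite rowK /= nth_index //.
Qed.
End Work.

Lemma card_range n (S : {set 'I_n}) a b :
  (forall i, i \in S -> a <= i < a + b)%N -> (#|S| <= b)%N.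
Proof.
move=> H; rewrite cardE -(size_map val) -[X in (_ <= X)%N](size_iota a b); apply: uniq_leq_size.
  by rewrite map_inj_uniq ?enum_uniq //; exact: val_inj.
by move=> x /mapP [i]; rewrite mem_enum => /H Hi ->; rewrite mem_iota.
Qed.


Lemma final_contra (R : realType) (d n : nat) (W : 'I_n -> 'M[R]_d)
  (phi : 'I_n -> 'rV[R]_d) : (2 <= d)%N ->
  (forall i, hyperplane (W i)) -> (forall i, (phi i == orthocompl (W i))%MS) ->
  phase_retrieval W -> forall (S : {set 'I_n}) (u : 'rV[R]_d), u != 0 ->
  (forall i, i \in S -> dotv u (phi i) = 0) -> (#|~: S| < d.-1)%N -> False.
Proof.
move=> d2 hW hphi PR S u u0 Hu hS.
have hs : (size (u :: map phi (enum (~: S))) < d)%N.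
  rewrite /= size_map -cardE; move: hS; set k := #|~: S|; move=> hS; lia.
have [v v0 Hv] := exists_orth_seq hs.
have d0 : (0 < d)%N by lia.
have uv : dotv u v = 0 by rewrite dotvC; apply: Hv; rewrite mem_head.
have Hi : forall i, dotv u (phi i) = 0 \/ dotv v (phi i) = 0.
  move=> i; case: (boolP (i \in S)) => Hi; first by left; apply: Hu.
  right; apply: Hv; rewrite inE; apply/orP; right; apply: map_f.
  by rewrite mem_enum inE Hi.
have [E|E] := PR_key d0 hW hphi PR uv Hi.
- by rewrite E eqxx in u0.
- by rewrite E eqxx in v0.
Qed.

Lemma exists_phi (R : realType) (d : nat) (W : 'M[R]_d) : (0 < d)%N ->
  hyperplane W -> exists phi : 'rV[R]_d, (phi == orthocompl W)%MS.
Proof.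
move=> d0 hW.
set K := orthocompl W.
have rK : \rank K = 1%N by rewrite /K /orthocompl mxrank_ker mxrank_tr hW; lia.
have K0 : K != 0 by rewrite -mxrank_eq0 rK.
have [i Hi] : exists i, row i K != 0.
  case: (pickP (fun i => row i K != 0)) => [i Hi | H]; first by exists i.
  have K00 : K = 0.
    apply/row_matrixP => l; rewrite row0; move: (H l) => /= /negbFE/eqP //.
  by rewrite K00 eqxx in K0.
exists (row i K).
case: (mxrank_leqif_eq (row_sub i K)) => _ <-.
by rewrite rank_rV Hi rK.
Qed.

Theorem mainTheorem7 (R : realType) (d n : nat) (W : 'I_n -> 'M[R]_d) :
  (2 <= d)%N ->
  (forall i, hyperplane (W i)) ->
  phase_retrieval W ->
  (2 * d - 2 <= n)%N /\
  (n = (2 * d - 2)%N ->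
   forall phi : 'I_n -> 'rV[R]_d,
     (forall i, (phi i == orthocompl (W i))%MS) ->
     full_spark phi).
Proof.
move=> d2 hW PR.
have d0 : (0 < d)%N by lia.
split.
  rewrite leqNgt; apply/negP => Hlt.
  have [phi Hphi] := fin_all_exists (fun i => exists_phi d0 (hW i)).
  set S := [set i : 'I_n | (i < d.-1)%N].
  have cS : (#|S| <= d.-1)%N.
    by apply: (@card_range _ _ 0) => i; rewrite inE add0n.
  have hs : (size (map phi (enum S)) < d)%N.
    by rewrite size_map -cardE; move: cS; set k := #|S|; lia.
  have [u u0 Hu] := exists_orth_seq hs.
  apply: (final_contra d2 hW Hphi PR (S := S) u0).
    by move=> i Hi; apply: Hu; apply: map_f; rewrite mem_enum.
  have : (#|~: S| <= n - d.-1)%N.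
    apply: (@card_range _ _ d.-1) => i; rewrite !inE -leqNgt => Hi.
    have := ltn_ord i; lia.
  set k := #|~: S|; move: Hlt; lia.
move=> Hn phi Hphi f finj.
apply: contraT => Hnf; exfalso.
set M := \matrix_(k < d) phi (f k).
have rM : (\rank M < d)%N.
  by rewrite ltn_neqAle rank_leq_col andbT; exact: Hnf.
have [u u0 Hu] := exists_orth rM.
apply: (final_contra d2 hW Hphi PR (S := f @: [set: 'I_d]) u0).
  by move=> i /imsetP [k _ ->]; have := Hu k; rewrite rowK.
have := cardsC (f @: [set: 'I_d]).
rewrite card_imset // cardsT !card_ord.
set k := #|~: _|; lia.
Qed.
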